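(* Let $m,n \ge 1$ be integers with $\gcd(m,n) > 1$ and such that $(m,n) \neq (2,2)$ (i.e., at least one of $m,n$ is different from $2$). Then the tensor product $K_m \otimes K_n$ is not a circulant graph.
   Context: Graphs have no multiple edges but may have loops. The tensor product $G \otimes H$ of graphs $G$ and $H$ has vertex set $V(G)\times V(H)$, with $(g,h)$ adjacent to $(g',h')$ if and only if $g$ is adjacent to $g'$ in $G$ and $h$ is adjacent to $h'$ in $H$. For an integer $n\ge 1$ and a set $S$ of integers, the circulant graph $C_nS$ has vertex set $\{0,1,\dots,n-1\}$, with $i$ adjacent to $j$ if and only if $i-j \equiv \pm s \pmod n$ for some $s\in S$. A graph is circulant if it is isomorphic to some $C_nS$; equivalently, if its automorphism group contains a cyclic subgroup acting transitively on the vertices. $K_n$ denotes the complete graph on $n$ vertices (no loops). *)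

(* Defs.v *)
From mathcomp Require Import all_boot all_order all_algebra.
Set Implicit Arguments. Unset Strict Implicit. Unset Printing Implicit Defensive.
Import GRing.Theory Num.Theory.

(* A graph (no multiple edges, loops allowed) on a finite vertex type is a
   symmetric relation [e : rel V]. *)

Definition complete_adj (n : nat) : rel 'I_n := fun i j => i != j.

Definition tensor_adj (V W : finType) (e : rel V) (f : rel W) : rel (V * W) :=
  fun x y => e x.1 y.1 && f x.2 y.2.

Definition circ_adj (N : nat) (S : int -> Prop) (i j : 'I_N) : Prop :=
  exists s : int, S s /\
    (((i%:Z - j%:Z) = s %[mod N%:Z])%Z \/ ((i%:Z - j%:Z) = - s %[mod N%:Z])%Z).

Definition is_circulant (V : finType) (e : rel V) : Prop :=
  exists (N : nat) (S : int -> Prop) (phi : V -> 'I_N),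
    (0 < N)%N /\ bijective phi /\
    forall x y : V, e x y <-> circ_adj S (phi x) (phi y).

(* Main.v *)
Require Import Defs.
From mathcomp Require Import all_boot all_order all_algebra.
Import GRing.Theory Num.Theory.
Set Implicit Arguments. Unset Strict Implicit. Unset Printing Implicit Defensive.
Section OM.
Local Open Scope ring_scope.
Lemma ordS_mod N (i j : 'I_N) :
  (((ordS i)%:Z - (ordS j)%:Z) %% N%:Z = (i%:Z - j%:Z) %% N%:Z)%Z.
Proof.
rewrite /= -!modz_nat modzDml -modzDmr modzNm modzDmr.
by rewrite !intS opprD addrACA subrr add0r.
Qed.
End OM.
From mathcomp Require Import zify.
Definition Gp (A B : eqType) (u v : A * B) := (u.1 != v.1) && (u.2 != v.2).

Lemma tri (A B : eqType) (u v w : A * B) : u != v -> u != w ->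
  ~~ Gp u v -> ~~ Gp u w -> Gp v w -> (u.1 == v.1) = ~~ (u.1 == w.1).
Proof.
case: u => u1 u2; case: v => v1 v2; case: w => w1 w2; rewrite /Gp /= !xpair_eqE.
case: (eqVneq u1 v1) => E1; case: (eqVneq u1 w1) => E2;
case: (eqVneq u2 v2) => E3; case: (eqVneq u2 w2) => E4; rewrite ?E1 ?E2 ?E3 ?E4 //=;
try subst; rewrite ?eqxx ?andbF ?andbT //= ?E1 ?E2 ?E3 ?E4 //.
Qed.

Lemma pair_neq1 (A B : eqType) (u v : A * B) : u != v -> ~~ Gp u v ->
  (u.1 == v.1) = (u.2 != v.2).
Proof.
case: u => u1 u2; case: v => v1 v2; rewrite /Gp /= !xpair_eqE.
case: (eqVneq u1 v1) => E1; case: (eqVneq u2 v2) => E2; rewrite ?E1 ?E2 //=;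
try subst; rewrite ?eqxx ?andbF ?andbT //= ?E1 ?E2 //.
Qed.

Definition oth n (b : 'I_n) : 'I_n := odflt b [pick c | c != b].

Lemma oth_neq n (b : 'I_n) : (1 < n)%N -> oth b != b.
Proof.
move=> n1; rewrite /oth; case: pickP => [c //|H] /=.
have hc : ((if val b == 0%N then 1 else 0) < n)%N by case: ifP => _ //; exact: ltnW n1.
move: (H (Ordinal hc)); rewrite /= -(inj_eq val_inj) /=.
case: (eqVneq (val b) 0%N) => [->|nb] /negbFE /eqP // E.
by move/eqP: nb; case; exact: esym E.
Qed.

Section Auto.
Variables (m n : nat) (sg : 'I_m * 'I_n -> 'I_m * 'I_n).
Hypotheses (m1 : (1 < m)%N) (n1 : (1 < n)%N) (sinj : injective sg)
  (sG : forall x y, Gp (sg x) (sg y) = Gp x y).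

Let t x y := (sg x).1 == (sg y).1.

Lemma L1 x y z : x.1 = y.1 -> x.2 != y.2 -> z.2 = x.2 -> z.1 != x.1 ->
  t x y = ~~ t x z.
Proof.
move=> e1 ne1 e2 ne2; apply: tri.
- by rewrite (inj_eq sinj); apply: contra ne1 => /eqP ->.
- by rewrite (inj_eq sinj); apply: contra ne2 => /eqP ->.
- by rewrite sG /Gp e1 eqxx.
- by rewrite sG /Gp e2 eqxx andbF.
- by rewrite sG /Gp -e1 e2 (eq_sym x.1) ne2 (eq_sym y.2) ne1.
Qed.

Definition s x := t x (x.1, oth x.2).

Lemma P1 x y : x.1 = y.1 -> x.2 != y.2 -> t x y = s x.
Proof.
move=> e ne; rewrite /s (L1 (z := (oth x.1, x.2))) ?oth_neq //.
by rewrite (L1 (y := (x.1, oth x.2)) (z := (oth x.1, x.2))) ?oth_neq // eq_sym oth_neq.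
Qed.

Lemma P2 x z : x.2 = z.2 -> x.1 != z.1 -> t x z = ~~ s x.
Proof.
move=> e ne; rewrite /s (L1 (y := (x.1, oth x.2)) (z := z)) ?negbK //.
  by rewrite eq_sym oth_neq.
by rewrite eq_sym.
Qed.

Lemma tC x y : t x y = t y x. Proof. by rewrite /t eq_sym. Qed.

Lemma P3 x y : x.1 = y.1 -> s x = s y.
Proof.
move=> e; case: (eqVneq x.2 y.2) => ne.
  by have -> : x = y by case: x y e ne => [? ?] [? ?] /= -> ->.
by rewrite -(P1 e ne) tC (P1 (esym e)) // eq_sym.
Qed.

Lemma P4 x y : x.2 = y.2 -> s x = s y.
Proof.
move=> e; case: (eqVneq x.1 y.1) => ne.
  by have -> : x = y by case: x y e ne => [? ?] [? ?] /= -> ->.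
apply: negb_inj; rewrite -(P2 e ne) tC (P2 (esym e)) // 1?eq_sym //.
Qed.

Lemma P5 x y : s x = s y.
Proof. by rewrite (P4 (y := (y.1, x.2))) // (P3 (y := y)). Qed.

Lemma pres_or_swap :
  ((forall x y, x.1 = y.1 -> (sg x).1 = (sg y).1) /\
   (forall x y, x.2 = y.2 -> (sg x).2 = (sg y).2)) \/
  ((forall x y, x.1 = y.1 -> (sg x).2 = (sg y).2) /\
   (forall x y, x.2 = y.2 -> (sg x).1 = (sg y).1)).
Proof.
have m0 : (0 < m)%N by exact: ltnW m1.
have n0 : (0 < n)%N by exact: ltnW n1.
pose x0 := (Ordinal m0, Ordinal n0).
have Hr x y : x.1 = y.1 -> x.2 != y.2 -> ((sg x).1 == (sg y).1) = s x0.
  by move=> e ne; rewrite -(P5 x x0); exact: P1.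
have Hc x y : x.2 = y.2 -> x.1 != y.1 -> ((sg x).1 == (sg y).1) = ~~ s x0.
  by move=> e ne; rewrite -(P5 x x0); exact: P2.
have Nq x y : x != y -> ~~ Gp x y -> ((sg x).1 == (sg y).1) = ((sg x).2 != (sg y).2).
  by move=> ne ng; apply: pair_neq1; rewrite ?(inj_eq sinj) ?sG.
have Eq (x y : 'I_m * 'I_n) : x.1 = y.1 -> x.2 = y.2 -> x = y.
  by case: x y => [? ?] [? ?] /= -> ->.
case E: (s x0); [left|right]; split => x y e.
- case: (eqVneq x.2 y.2) => ne; first by rewrite (Eq x y e ne).
  by apply/eqP; rewrite Hr ?E.
- case: (eqVneq x.1 y.1) => ne; first by rewrite (Eq x y ne e).
  have nxy : x != y by apply: contraNneq ne => ->.
  by apply/eqP/negbNE; rewrite -Nq ?Hc ?E // /Gp e eqxx andbF.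
- case: (eqVneq x.2 y.2) => ne; first by rewrite (Eq x y e ne).
  have nxy : x != y by apply: contraNneq ne => ->.
  by apply/eqP/negbNE; rewrite -Nq ?Hr ?E // /Gp e eqxx.
- case: (eqVneq x.1 y.1) => ne; first by rewrite (Eq x y ne e).
  by apply/eqP; rewrite Hc ?E.
Qed.
End Auto.
Lemma iter_fixM (T : Type) (f : T -> T) x k q : iter k f x = x -> iter (k * q) f x = x.
Proof.
move=> h; elim: q => [|q IH]; first by rewrite muln0.
by rewrite mulnS iterD IH h.
Qed.

Lemma order_le (T : finType) (f : T -> T) x : (order f x <= #|T|)%N.
Proof. exact: max_card. Qed.

Section Main.
Variables (m n : nat) (sg : 'I_m * 'I_n -> 'I_m * 'I_n).
Hypotheses (m1 : (1 < m)%N) (n1 : (1 < n)%N) (sinj : injective sg)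
  (per : forall x k, iter k sg x = x -> (m * n %| k)%N)
  (g1 : (1 < gcdn m n)%N) (n22 : ~ (m = 2 /\ n = 2)).

Lemma pres_false :
  (forall x y, x.1 = y.1 -> (sg x).1 = (sg y).1) ->
  (forall x y, x.2 = y.2 -> (sg x).2 = (sg y).2) -> False.
Proof.
move=> H1 H2.
have m0 : (0 < m)%N by exact: ltnW m1.
have n0 : (0 < n)%N by exact: ltnW n1.
pose a0 := Ordinal m0; pose b0 := Ordinal n0.
pose al a := (sg (a, b0)).1; pose be b := (sg (a0, b)).2.
have sgE x : sg x = (al x.1, be x.2).
  by case: x => a b; rewrite [sg (a, b)]surjective_pairing; congr pair; [exact: H1 | exact: H2].
have alI : injective al.
  move=> a a' e; have : sg (a, b0) = sg (a', b0).
    by rewrite !sgE /= e.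
  by move/sinj => [].
have beI : injective be.
  move=> b b' e; have : sg (a0, b) = sg (a0, b').
    by rewrite !sgE /= e.
  by move/sinj => [].
have itE k x : iter k sg x = (iter k al x.1, iter k be x.2).
  elim: k => [|k IH]; first by case: x.
  by rewrite !iterS IH sgE.
pose r := order al a0; pose s := order be b0.
have hr : iter r al a0 = a0 by exact: iter_order.
have hs : iter s be b0 = b0 by exact: iter_order.
have rm : (r <= m)%N by have := order_le al a0; rewrite card_ord.
have sn : (s <= n)%N by have := order_le be b0; rewrite card_ord.
have r0 : (0 < r)%N by exact: order_gt0.
have s0 : (0 < s)%N by exact: order_gt0.
pose L := lcmn r s.
have HL : iter L sg (a0, b0) = (a0, b0).
  rewrite itE /=.
  have [q1 eq1] : exists q, L = r * q.
    by exists (L %/ r); rewrite [RHS]mulnC divnK // dvdn_lcml.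
  have [q2 eq2] : exists q, L = s * q.
    by exists (L %/ s); rewrite [RHS]mulnC divnK // dvdn_lcmr.
  by rewrite {1}eq1 iter_fixM // eq2 iter_fixM.
have dL := per HL.
have L0 : (0 < L)%N by rewrite lcmn_gt0 r0 s0.
have Lle : (L <= r * s)%N by apply: dvdn_leq; [rewrite muln_gt0 r0 s0 | rewrite dvdn_lcm dvdn_mulr // dvdn_mull].
have mnL := dvdn_leq L0 dL.
have rsmn : (r * s <= m * n)%N by exact: leq_mul.
have eL : L = r * s by lia.
have er : r = m by nia.
have es : s = n by nia.
have := muln_lcm_gcd r s; rewrite -/L eL => eg.
have g1' : gcdn r s = 1.
  have : (r * s * gcdn r s = r * s * 1)%N by rewrite muln1.
  by move/eqP; rewrite eqn_pmul2l ?muln_gt0 ?r0 ?s0 // => /eqP.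
by move: g1; rewrite -er -es g1'.
Qed.

Lemma swap_false :
  (forall x y, x.1 = y.1 -> (sg x).2 = (sg y).2) ->
  (forall x y, x.2 = y.2 -> (sg x).1 = (sg y).1) -> False.
Proof.
move=> H1 H2.
have m0 : (0 < m)%N by exact: ltnW m1.
have n0 : (0 < n)%N by exact: ltnW n1.
pose a0 := Ordinal m0; pose b0 := Ordinal n0.
pose al a := (sg (a, b0)).2; pose be b := (sg (a0, b)).1.
have sgE x : sg x = (be x.2, al x.1).
  by case: x => a b; rewrite [sg (a, b)]surjective_pairing; congr pair; [exact: H2 | exact: H1].
have alI : injective al.
  move=> a a' e; have : sg (a, b0) = sg (a', b0).
    by rewrite !sgE /= e.
  by move/sinj => [].
have beI : injective be.
  move=> b b' e; have : sg (a0, b) = sg (a0, b').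
    by rewrite !sgE /= e.
  by move/sinj => [].
have mn : (m <= n)%N by have := leq_card _ alI; rewrite !card_ord.
have nm : (n <= m)%N by have := leq_card _ beI; rewrite !card_ord.
pose ga a := be (al a).
have gaI : injective ga by move=> a a' /beI /alI.
have itE k a : iter k (fun y => sg (sg y)) (a, al a) = (iter k ga a, al (iter k ga a)).
  elim: k => [|k IH] //.
  by rewrite iterS IH !sgE.
pose r := order ga a0.
have hr : iter r ga a0 = a0 by exact: iter_order.
have rm : (r <= m)%N by have := order_le ga a0; rewrite card_ord.
have r0 : (0 < r)%N by exact: order_gt0.
have HL : iter (r * 2) sg (a0, al a0) = (a0, al a0).
  by rewrite iterM itE hr.
have := dvdn_leq _ (per HL); rewrite muln_gt0 r0 => /(_ isT) h.
apply: n22; split; nia.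
Qed.

End Main.

Lemma circ_ordS N (S : int -> Prop) (i j : 'I_N) :
  circ_adj S (ordS i) (ordS j) <-> circ_adj S i j.
Proof. by rewrite /circ_adj ordS_mod. Qed.

Lemma iter_ordS N k (i : 'I_N) : val (iter k (@ordS N) i) = ((i + k) %% N)%N.
Proof.
elim: k => [|k IH] /=; first by rewrite addn0 modn_small.
by rewrite IH -addn1 modnDml -addnA addn1.
Qed.

Theorem theorem2 (m n : nat) :
  (1 <= m)%N -> (1 <= n)%N -> (1 < gcdn m n)%N -> ~ (m = 2 /\ n = 2)%N ->
  ~ is_circulant (tensor_adj (@complete_adj m) (@complete_adj n)).
Proof.
move=> hm hn g1 n22 [N [S [phi [N0 [phib Hadj]]]]].
have m1 : (1 < m)%N.
  by case: m hm g1 {n22 Hadj phi phib} => [|[|m]] //; rewrite gcd1n.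
have n1 : (1 < n)%N.
  by case: n hn g1 {n22 Hadj phi phib} => [|[|n]] //; rewrite gcdn1.
have eN : N = (m * n)%N.
  by have := bij_eq_card phib; rewrite card_prod !card_ord.
case: phib => g phiK gK.
pose sg x := g (ordS (phi x)).
have phisg x : phi (sg x) = ordS (phi x) by rewrite /sg gK.
have sinj : injective sg.
  move=> x y /(congr1 phi); rewrite !phisg => /(congr1 (@ord_pred N)).
  by rewrite !ordSK => /(congr1 g); rewrite !phiK.
have sG x y : Gp (sg x) (sg y) = Gp x y.
  apply/idP/idP => h.
  - apply/(Hadj x y); rewrite -circ_ordS -!phisg; exact/(Hadj (sg x) (sg y)).
  - apply/(Hadj (sg x) (sg y)); rewrite !phisg circ_ordS; exact/(Hadj x y).
have per x k : iter k sg x = x -> (m * n %| k)%N.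
  have pit : phi (iter k sg x) = iter k (@ordS N) (phi x).
    by elim: k => [|k IH] //=; rewrite phisg IH.
  move=> /(congr1 phi); rewrite pit => /(congr1 val); rewrite iter_ordS => e.
  have : ((phi x + k) == (phi x + 0) %[mod N])%N by rewrite e addn0 modn_small.
  by rewrite eqn_modDl mod0n -eN.
have [[H1 H2]|[H1 H2]] := pres_or_swap m1 n1 sinj sG.
- exact: (pres_false m1 n1 sinj per g1 n22 H1 H2).
- exact: (swap_false m1 n1 sinj per g1 n22 H1 H2).
Qed.
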